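(* For any valued field $K$ the following are equivalent: (1) for every $d\ge 1$, every set $X\subseteq K^d$ that is closed under 2-element convex combinations (i.e. $\alpha x+\beta y\in X$ whenever $x,y\in X$, $\alpha,\beta\in\mathcal{O}$, $\alpha+\beta=1$) is convex; (2) the residue field $k$ is not isomorphic to $\mathbb{F}_2$.
   Context: $K$ is a field with a valuation $\nu:K\to\Gamma\cup\{\infty\}$, valuation ring $\mathcal{O}=\{x:\nu(x)\ge 0\}$, maximal ideal $\mathfrak{m}=\{x:\nu(x)>0\}$ and residue field $k=\mathcal{O}/\mathfrak{m}$. A set $X\subseteq K^d$ is convex if for every $n\ge 1$, all $x_1,\dots,x_n\in X$ and all $\alpha_1,\dots,\alpha_n\in\mathcal{O}$ with $\alpha_1+\dots+\alpha_n=1$, we have $\alpha_1x_1+\dots+\alpha_nx_n\in X$. *)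

(* Defs.v *)
From mathcomp Require Import all_boot all_order all_algebra.
Set Implicit Arguments. Unset Strict Implicit. Unset Printing Implicit Defensive.
Import GRing.Theory.
Local Open Scope ring_scope.

Record ordered_abelian_group (G : zmodType) (le : rel G) : Prop := {
  oag_refl : reflexive le;
  oag_antisym : antisymmetric le;
  oag_trans : transitive le;
  oag_total : total le;
  oag_add : forall x y z, le x y -> le (x + z) (y + z) }.

(* Gamma u {oo} is encoded as option G, with None = oo. *)
Definition oleq (G : zmodType) (le : rel G) (a b : option G) : bool :=
  match a, b with
  | _, None => true
  | None, Some _ => false
  | Some x, Some y => le x y
  end.

Definition oadd (G : zmodType) (a b : option G) : option G :=
  match a, b with
  | Some x, Some y => Some (x + y)
  | _, _ => None
  end.

Definition is_valuation (K : fieldType) (G : zmodType) (le : rel G)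
    (nu : K -> option G) : Prop :=
  (forall x, nu x = None <-> x = 0) /\
  (forall x y, nu (x * y) = oadd (nu x) (nu y)) /\
  (forall x y, oleq le (nu x) (nu (x + y)) || oleq le (nu y) (nu (x + y))).

Definition val_ring (K : fieldType) (G : zmodType) (le : rel G)
    (nu : K -> option G) (x : K) : Prop := oleq le (Some 0) (nu x).

Definition max_ideal (K : fieldType) (G : zmodType) (le : rel G)
    (nu : K -> option G) (x : K) : Prop :=
  oleq le (Some 0) (nu x) /\ nu x <> Some 0.

(* The residue field k = O/m is isomorphic to F_2: by the first isomorphism
   theorem, there is a surjective ring morphism O -> F_2 with kernel m. *)
Definition residue_field_iso_F2 (K : fieldType) (G : zmodType) (le : rel G)
    (nu : K -> option G) : Prop :=
  exists f : K -> 'F_2,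
    (forall x y, val_ring le nu x -> val_ring le nu y -> f (x + y) = f x + f y) /\
    (forall x y, val_ring le nu x -> val_ring le nu y -> f (x * y) = f x * f y) /\
    f 1 = 1 /\
    (forall x, val_ring le nu x -> (f x = 0 <-> max_ideal le nu x)) /\
    (forall z : 'F_2, exists x, val_ring le nu x /\ f x = z).

Definition vconvex (K : fieldType) (G : zmodType) (le : rel G)
    (nu : K -> option G) (d : nat) (X : 'rV[K]_d -> Prop) : Prop :=
  forall (n : nat) (x : 'I_n -> 'rV[K]_d) (a : 'I_n -> K),
    (1 <= n)%N -> (forall i, X (x i)) -> (forall i, val_ring le nu (a i)) ->
    \sum_(i < n) a i = 1 -> X (\sum_(i < n) a i *: x i).

Definition vconvex2 (K : fieldType) (G : zmodType) (le : rel G)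
    (nu : K -> option G) (d : nat) (X : 'rV[K]_d -> Prop) : Prop :=
  forall (x y : 'rV[K]_d) (a b : K),
    X x -> X y -> val_ring le nu a -> val_ring le nu b -> a + b = 1 ->
    X (a *: x + b *: y).

(* Main.v *)
Require Import Defs.
From mathcomp Require Import all_boot all_order all_algebra.
From Stdlib Require Import Classical ClassicalEpsilon.
From mathcomp Require Import ring.
Set Implicit Arguments. Unset Strict Implicit. Unset Printing Implicit Defensive.
Import GRing.Theory.
Local Open Scope ring_scope.

Lemma oleq_trans (G : zmodType) (le : rel G) : ordered_abelian_group le ->
  forall a b c, oleq le a b -> oleq le b c -> oleq le a c.
Proof. move=> Hg [a|] [b|] [c|] //=; exact: (oag_trans Hg). Qed.

Lemma oleq_anti (G : zmodType) (le : rel G) : ordered_abelian_group le ->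
  forall a b, oleq le a b -> oleq le b a -> a = b.
Proof. move=> Hg [a|] [b|] //= h1 h2; congr Some; apply: (oag_antisym Hg); by rewrite h1 h2. Qed.

Lemma oleq_refl (G : zmodType) (le : rel G) : ordered_abelian_group le ->
  forall a, oleq le a a.
Proof. move=> Hg [a|] //=; exact: (oag_refl Hg). Qed.

Lemma le_addl0 (G : zmodType) (le : rel G) : ordered_abelian_group le ->
  forall a b, le 0 a -> le b (a + b).
Proof. move=> Hg a b h; have := oag_add Hg b h; by rewrite add0r. Qed.


Lemma nu1 (K : fieldType) (G : zmodType) (le : rel G) (nu : K -> option G) :
  ordered_abelian_group le -> is_valuation le nu -> nu 1 = Some 0.
Proof.
move=> Hg [H0 [Hm Hu]].
case E: (nu 1) => [g|]; last by have := (proj1 (H0 1) E); move/eqP; rewrite oner_eq0.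
have := Hm 1 1; rewrite mulr1 E /= => -[] hg.
by congr Some; apply: (@addIr _ g); rewrite add0r.
Qed.

Lemma nuN1 (K : fieldType) (G : zmodType) (le : rel G) (nu : K -> option G) :
  ordered_abelian_group le -> is_valuation le nu -> nu (-1) = Some 0.
Proof.
move=> Hg Hv; have h1 := nu1 Hg Hv; case: Hv => [H0 [Hm Hu]].
have := Hm (-1) (-1); rewrite mulrNN mulr1 h1.
case E: (nu (-1)) => [h|] //= [] hh; congr Some.
case/orP: (oag_total Hg h 0) => le1.
- have := oag_add Hg h le1; rewrite -hh add0r => le2.
  by apply: (oag_antisym Hg); rewrite le1 le2.
- have := oag_add Hg h le1; rewrite -hh add0r => le2.
  by apply: (oag_antisym Hg); rewrite le1 le2.
Qed.

Lemma nuN (K : fieldType) (G : zmodType) (le : rel G) (nu : K -> option G) :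
  ordered_abelian_group le -> is_valuation le nu -> forall x, nu (- x) = nu x.
Proof.
move=> Hg Hv x; have h1 := nuN1 Hg Hv; case: Hv => [H0 [Hm Hu]].
by rewrite -mulN1r Hm h1; case: (nu x) => //= g; rewrite add0r.
Qed.

Lemma vr_add (K : fieldType) (G : zmodType) (le : rel G) (nu : K -> option G) :
  ordered_abelian_group le -> is_valuation le nu -> forall x y,
  val_ring le nu x -> val_ring le nu y -> val_ring le nu (x + y).
Proof.
move=> Hg [H0 [Hm Hu]] x y hx hy; rewrite /val_ring.
case/orP: (Hu x y) => h; [exact: oleq_trans Hg _ _ _ hx h| exact: oleq_trans Hg _ _ _ hy h].
Qed.

Lemma mi_add (K : fieldType) (G : zmodType) (le : rel G) (nu : K -> option G) :
  ordered_abelian_group le -> is_valuation le nu -> forall x y,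
  max_ideal le nu x -> max_ideal le nu y -> max_ideal le nu (x + y).
Proof.
move=> Hg Hv x y [hx nx] [hy ny]; split; first exact: vr_add.
move=> E; case: Hv => [H0 [Hm Hu]].
case/orP: (Hu x y); rewrite E => h.
- by apply: nx; apply: (oleq_anti Hg).
- by apply: ny; apply: (oleq_anti Hg).
Qed.

Lemma vr_opp (K : fieldType) (G : zmodType) (le : rel G) (nu : K -> option G) :
  ordered_abelian_group le -> is_valuation le nu -> forall x,
  val_ring le nu (- x) <-> val_ring le nu x.
Proof. by move=> Hg Hv x; rewrite /val_ring (nuN Hg Hv). Qed.

Lemma mi_opp (K : fieldType) (G : zmodType) (le : rel G) (nu : K -> option G) :
  ordered_abelian_group le -> is_valuation le nu -> forall x,
  max_ideal le nu (- x) <-> max_ideal le nu x.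
Proof. by move=> Hg Hv x; rewrite /max_ideal (nuN Hg Hv). Qed.

Lemma vr_mul (K : fieldType) (G : zmodType) (le : rel G) (nu : K -> option G) :
  ordered_abelian_group le -> is_valuation le nu -> forall x y,
  val_ring le nu x -> val_ring le nu y -> val_ring le nu (x * y).
Proof.
move=> Hg [H0 [Hm Hu]] x y; rewrite /val_ring Hm.
case: (nu x) => [a|] //; case: (nu y) => [b|] //= ha hb.
apply: (oag_trans Hg hb); exact: le_addl0.
Qed.

Lemma mi_mul (K : fieldType) (G : zmodType) (le : rel G) (nu : K -> option G) :
  ordered_abelian_group le -> is_valuation le nu -> forall x y,
  max_ideal le nu x -> val_ring le nu y -> max_ideal le nu (x * y).
Proof.
move=> Hg [H0 [Hm Hu]] x y; rewrite /max_ideal /val_ring Hm.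
case: (nu x) => [a|] //; case: (nu y) => [b|] //= [ha na] hb; split.
  apply: (oag_trans Hg hb); exact: le_addl0.
move=> [] E; apply: na; congr Some; apply: (oag_antisym Hg); rewrite ha andbT.
have := le_addl0 Hg a hb; by rewrite addrC -E.
Qed.

Lemma unitE (K : fieldType) (G : zmodType) (le : rel G) (nu : K -> option G) :
  ordered_abelian_group le -> forall x,
  nu x = Some 0 <-> (val_ring le nu x /\ ~ max_ideal le nu x).
Proof.
move=> Hg x; rewrite /val_ring /max_ideal; split.
  by move=> ->; split; [exact: oleq_refl | case].
by case=> h1 h2; case: (nu x =P Some 0) => // h; exfalso; apply: h2.
Qed.

Lemma nu_unit_mul (K : fieldType) (G : zmodType) (le : rel G) (nu : K -> option G) :
  is_valuation le nu -> forall x y, nu x = Some 0 -> nu y = Some 0 -> nu (x * y) = Some 0.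
Proof. by move=> [H0 [Hm Hu]] x y hx hy; rewrite Hm hx hy /= addr0. Qed.

Lemma nu_inv (K : fieldType) (G : zmodType) (le : rel G) (nu : K -> option G) :
  ordered_abelian_group le -> is_valuation le nu -> forall x, nu x = Some 0 -> nu x^-1 = Some 0.
Proof.
move=> Hg Hv x hx; have h1 := nu1 Hg Hv; case: Hv => [H0 [Hm Hu]].
have x0 : x != 0 by apply/eqP => /(proj2 (H0 x)); rewrite hx.
have := Hm x x^-1; rewrite mulfV // h1 hx.
by case: (nu x^-1) => [g|] //= [] ->; rewrite add0r.
Qed.

Lemma vr_div (K : fieldType) (G : zmodType) (le : rel G) (nu : K -> option G) :
  ordered_abelian_group le -> is_valuation le nu -> forall a t,
  val_ring le nu a -> nu t = Some 0 -> val_ring le nu (a / t).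
Proof.
move=> Hg Hv a t ha ht; apply: vr_mul => //.
by rewrite /val_ring (nu_inv Hg Hv ht); apply: oleq_refl.
Qed.

Lemma vr1 (K : fieldType) (G : zmodType) (le : rel G) (nu : K -> option G) :
  ordered_abelian_group le -> is_valuation le nu -> val_ring le nu 1.
Proof. by move=> Hg Hv; rewrite /val_ring (nu1 Hg Hv); apply: oleq_refl. Qed.

Lemma F2_cases (z : 'F_2) : z = 0 \/ z = 1.
Proof. by case: z => [[|[|n]]] //= Hz; [left|right]; apply/val_inj. Qed.

Lemma exists_t (K : fieldType) (G : zmodType) (le : rel G) (nu : K -> option G) :
  ordered_abelian_group le -> is_valuation le nu -> ~ residue_field_iso_F2 le nu ->
  exists t, nu t = Some 0 /\ nu (1 - t) = Some 0.
Proof.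
move=> Hg Hv HF; apply: NNPP => Hn; apply: HF.
have H : forall t, val_ring le nu t -> ~ max_ideal le nu t -> max_ideal le nu (1 - t).
  move=> t ht nt; apply: NNPP => nt'; apply: Hn; exists t; split; first by apply/(unitE _ Hg).
  apply/(unitE _ Hg); split=> //; apply: vr_add => //; first exact: vr1.
  by apply/(vr_opp Hg Hv).
pose f (x : K) : 'F_2 := if excluded_middle_informative (max_ideal le nu x) then 0 else 1.
have f0 x : max_ideal le nu x -> f x = 0 by rewrite /f; case: excluded_middle_informative.
have f1 x : ~ max_ideal le nu x -> f x = 1 by rewrite /f; case: excluded_middle_informative.
have m2 : max_ideal le nu (1 + 1).
  have := H (-1); rewrite opprK; apply; first by apply/(vr_opp Hg Hv); exact: vr1.
  by move/(unitE _ Hg): (nuN1 Hg Hv) => [].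
have vr0 : val_ring le nu 0 by rewrite /val_ring (proj2 (proj1 Hv 0) erefl).
have m0 : max_ideal le nu 0 by split => //; rewrite (proj2 (proj1 Hv 0) erefl).
have n1 : ~ max_ideal le nu 1 by case=> _; rewrite (nu1 Hg Hv).
exists f; split; last split; last split; last split.
- move=> x y hx hy.
  case: (classic (max_ideal le nu x)) => mx; case: (classic (max_ideal le nu y)) => my.
  + by rewrite (f0 x) // (f0 y) // (f0 (x + y)) ?addr0 //; exact: mi_add.
  + rewrite (f0 x) // (f1 y) // (f1 (x + y)) ?add0r // => mxy; apply: my.
    have -> : y = (x + y) + - x by rewrite addrC addKr.
    by apply: mi_add => //; apply/(mi_opp Hg Hv).
  + rewrite (f1 x) // (f0 y) // (f1 (x + y)) ?addr0 // => mxy; apply: mx.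
    have -> : x = (x + y) + - y by rewrite addrK.
    by apply: mi_add => //; apply/(mi_opp Hg Hv).
  + rewrite (f1 x) // (f1 y) // (f0 (x + y)) //; first by apply/val_inj.
    have -> : x + y = (1 + 1) + - (1 - x) + - (1 - y).
      by ring.
    apply: mi_add => //; last by apply/(mi_opp Hg Hv); exact: H.
    by apply: mi_add => //; apply/(mi_opp Hg Hv); exact: H.
- move=> x y hx hy.
  case: (classic (max_ideal le nu x)) => mx.
    by rewrite (f0 x) // (f0 (x * y)) ?mul0r //; exact: mi_mul.
  case: (classic (max_ideal le nu y)) => my.
    by rewrite (f0 y) // (f0 (x * y)) ?mulr0 //; rewrite mulrC; exact: mi_mul.
  rewrite (f1 x) // (f1 y) // (f1 (x * y)) ?mulr1 //.
  move/(unitE _ Hg): (nu_unit_mul Hv (proj2 (unitE _ Hg x) (conj hx mx)) (proj2 (unitE _ Hg y) (conj hy my))).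
  by case.
- by rewrite f1.
- move=> x hx; split; last exact: f0.
  by case: (classic (max_ideal le nu x)) => // mx; rewrite f1.
- move=> z; case: (F2_cases z) => ->.
    by exists 0; split => //; rewrite f0.
  by exists 1; split; [exact: vr1 | rewrite f1].
Qed.

Lemma conv_of_t (K : fieldType) (G : zmodType) (le : rel G) (nu : K -> option G) :
  ordered_abelian_group le -> is_valuation le nu -> forall t,
  nu t = Some 0 -> nu (1 - t) = Some 0 ->
  forall d (X : 'rV[K]_d -> Prop), vconvex2 le nu X -> vconvex le nu X.
Proof.
move=> Hg Hv t ht ht1 d X H2 n; case: n => [|n] //.
have nz y : nu y = Some 0 -> y != 0.
  by move=> hy; apply/eqP => /(proj2 (proj1 Hv y)); rewrite hy.
have vt : val_ring le nu t by rewrite /val_ring ht; apply: oleq_refl.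
have vsub y z : val_ring le nu y -> val_ring le nu z -> val_ring le nu (y - z).
  by move=> hy hz; apply: vr_add => //; apply/(vr_opp Hg Hv).
elim: n => [|n IH] x a _ Xx va sa.
  move: sa; rewrite big_ord1 => a1; by rewrite big_ord1 a1 scale1r.
pose u := a ord0 / t.
have vu : val_ring le nu u by apply: vr_div.
have Xz : X (u *: x ord0 + (1 - u) *: x (lift ord0 ord0)).
  by apply: H2 => //; [apply: vsub => //; exact: vr1 | rewrite addrC subrK].
pose b (i : 'I_n.+1) := (if i == ord0 then a ord0 + a (lift ord0 ord0) - t
   else a (lift ord0 i)) / (1 - t).
pose y (i : 'I_n.+1) := x (lift ord0 i).
have Xw : X (\sum_(i < n.+1) b i *: y i).
  apply: IH => //.
  - by move=> i; apply: Xx.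
  - move=> i; rewrite /b; apply: vr_div => //; case: (i == ord0) => //.
    by apply: vsub => //; apply: vr_add.
  - move: sa; rewrite !big_ord_recl /b /= => sa.
    idtac.
    rewrite -big_distrl /= -mulrDl.
    have -> : a ord0 + a (lift ord0 ord0) - t + \sum_(i < n) a (lift ord0 (lift ord0 i)) = 1 - t.
      by rewrite -sa; ring.
    by rewrite divff //; apply: nz.
have := H2 _ _ t (1 - t) Xz Xw vt; rewrite /val_ring ht1 => /(_ (oleq_refl Hg _)).
have -> : t + (1 - t) = 1 by ring.
move=> /(_ erefl).
have e1 c : (1 - t) * (c / (1 - t)) = c by rewrite mulrC divfK //; apply: nz.
have e2 : t * u = a ord0 by rewrite /u mulrC divfK //; apply: nz.
have -> : \sum_(i < n.+2) a i *: x i = t *: (u *: x ord0 + (1 - u) *: x (lift ord0 ord0)) +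
    (1 - t) *: \sum_(i < n.+1) b i *: y i.
  rewrite big_ord_recl [in RHS]big_ord_recl big_ord_recl /b /y /=.
  rewrite !scalerDr scaler_sumr !scalerA e1 e2 mulrBr mulr1 e2.
  under [in RHS]eq_bigr => i _ do rewrite scalerA e1.
  rewrite !addrA; congr (_ + _); rewrite -addrA -scalerDl; congr (_ + _ *: _); ring.
done.
Qed.

Lemma not_conv (K : fieldType) (G : zmodType) (le : rel G) (nu : K -> option G) :
  ordered_abelian_group le -> is_valuation le nu -> residue_field_iso_F2 le nu ->
  ~ (forall (d : nat), (1 <= d)%N -> forall X : 'rV[K]_d -> Prop,
      vconvex2 le nu X -> vconvex le nu X).
Proof.
move=> Hg Hv [f [fD [fM [f1 [fk fs]]]]] H.
have vr0 : val_ring le nu 0 by rewrite /val_ring (proj2 (proj1 Hv 0) erefl).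
have m0 : max_ideal le nu 0 by split => //; rewrite (proj2 (proj1 Hv 0) erefl).
have f0 : f 0 = 0 by apply/(fk 0 vr0).
have F10 : (1 : 'F_2) <> 0 by move/(congr1 val).
pose c0 : 'I_2 := ord0.
pose c1 : 'I_2 := ord_max.
pose X (v : 'rV[K]_2) := [/\ val_ring le nu (v ord0 c0), val_ring le nu (v ord0 c1)
   & f (v ord0 c0) = 0 \/ f (v ord0 c1) = 0].
have HX : vconvex2 le nu X.
  move=> v w al be [v0 v1 vf] [w0 w1 wf] va vb sab.
  have fab : f al + f be = 1 by rewrite -fD // sab.
  have key j : val_ring le nu (v ord0 j) -> val_ring le nu (w ord0 j) ->
      val_ring le nu ((al *: v + be *: w) ord0 j) /\
      f ((al *: v + be *: w) ord0 j) = f al * f (v ord0 j) + f be * f (w ord0 j).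
    move=> hv hw; rewrite !mxE.
    have ha : val_ring le nu (al * v ord0 j) by apply: vr_mul.
    have hb : val_ring le nu (be * w ord0 j) by apply: vr_mul.
    by split; [apply: vr_add | rewrite fD // !fM].
  have [k0 e0] := key c0 v0 w0; have [k1 e1] := key c1 v1 w1.
  split => //; rewrite e0 e1.
  case: (F2_cases (f al)) => ea.
    have eb : f be = 1 by rewrite -fab ea add0r.
    by rewrite ea eb !mul0r !mul1r !add0r.
  have eb : f be = 0 by apply: (@addrI _ (f al)); rewrite fab ea addr0.
  by rewrite ea eb !mul0r !mul1r !addr0.
pose x := fun i : 'I_3 => \row_(j < 2) (if (i : nat) == j then (1 : K) else 0).
pose a := fun i : 'I_3 => if (i : nat) == 2%N then (-1 : K) else 1.
have vm1 : val_ring le nu (-1) by apply/(vr_opp Hg Hv); exact: vr1.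
have Xi : forall i, X (x i).
  move=> [[|[|[|m]]] hi] //; rewrite /X !mxE /=; split; try exact: vr1; try exact: vr0; auto.
have vi : forall i, val_ring le nu (a i).
  by move=> [[|[|[|m]]] hi] //=; try exact: vr1; exact: vm1.
have si : \sum_(i < 3) a i = 1 by rewrite !big_ord_recl big_ord0 /a /=; ring.
have := H 2 erefl X HX 3 x a erefl Xi vi si.
have e0 : (\sum_(i < 3) a i *: x i) ord0 c0 = 1.
  rewrite summxE !big_ord_recl big_ord0 !mxE /a /=; ring.
have e1 : (\sum_(i < 3) a i *: x i) ord0 c1 = 1.
  rewrite summxE !big_ord_recl big_ord0 !mxE /a /=; ring.
by rewrite /X e0 e1 f1 => -[_ _ []].
Qed.

Unset Implicit Arguments.
Set Strict Implicit.
Theorem proposition2p6 (K : fieldType) (G : zmodType) (le : rel G)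
    (nu : K -> option G) :
  ordered_abelian_group le -> is_valuation le nu ->
  ((forall (d : nat), (1 <= d)%N -> forall X : 'rV[K]_d -> Prop,
      vconvex2 le nu X -> vconvex le nu X)
   <-> ~ residue_field_iso_F2 le nu).
Proof.
move=> Hg Hv; split.
  by move=> H HF; exact: (not_conv Hg Hv HF H).
move=> HF d _ X H2; have [t [ht ht1]] := exists_t Hg Hv HF.
exact: (conv_of_t Hg Hv ht ht1 H2).
Qed.
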